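(* Consider the constrained online prediction problem and the \texttt{BanditQ} policy described in the context, run for a horizon of $T$ rounds with the constant parameter $V_t = V = \Theta(\sqrt{T})$ for all $t \ge 1$. Then for every protected user $i \in \mathcal{P}$ and every round $1 \le t \le T$, the state variable satisfies $Q_i(t) = O(T^{3/4})$, where the constant hidden in the $O(\cdot)$ does not depend on $T$, $t$ or the reward sequence (it may depend on $N$ and on the constant in $V=\Theta(\sqrt{T})$).
   Context: There are $N$ users. On each round $t=1,2,\dots$ an online policy chooses a probability vector $\bm{x}(t)=(x_1(t),\dots,x_N(t))$ in the standard simplex $\Delta_N=\{\bm{x}\in\mathbb{R}^N_{\ge 0}:\sum_i x_i=1\}$; afterwards an adversarially chosen reward vector $\bm{r}(t)=(r_1(t),\dots,r_N(t))\in[0,1]^N$ is revealed (full information), and the policy may use all past reward vectors to choose $\bm{x}(t+1)$. A subset $\mathcal{P}\subseteq[N]$ of protected users is given, with target rates $\lambda_i\in[0,1]$, $i\in\mathcal{P}$, satisfying $\sum_{i\in\mathcal{P}}\lambda_i\le 1$; set $\lambda_i=0$ for $i\notin\mathcal{P}$. The feasible set of stationary actions is $\Omega=\{\bm{x}^*\in\Delta_N : r_i(t)x^*_i\ge\lambda_i \text{ for all } i\in\mathcal{P} \text{ and all rounds } t\}$, which is assumed nonempty. The regret of a policy over $T$ rounds is $\mathrm{Regret}_T=\sup_{\bm{x}^*\in\Omega}\sum_{t=1}^T\sum_{i=1}^N r_i(t)\,(x_i^*-x_i(t))$. The \texttt{BanditQ} policy: for each $i\in\mathcal{P}$ maintain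 $Q_i(0)=0$ and $Q_i(t)=\max\big(0,\,Q_i(t-1)+\lambda_i-r_i(t)x_i(t)\big)$; for $i\notin\mathcal{P}$ set $Q_i(t)=0$ for all $t$. Given a non-negative parameter sequence $(V_t)_{t\ge1}$, define surrogate rewards $r'_i(t)=(Q_i(t-1)+V_t)\,r_i(t)$ for all $i\in[N]$. Starting from an arbitrary $\bm{x}(1)\in\Delta_N$, the policy updates by adaptive online gradient ascent: $\bm{x}(t+1)=\Pi_{\Delta_N}\Big(\bm{x}(t)+\bm{r}'(t)\big/\sqrt{2\sum_{\tau=1}^{t}\|\bm{r}'(\tau)\|_2^2}\Big)$, where $\Pi_{\Delta_N}$ denotes Euclidean projection onto $\Delta_N$. *)

(* Defs.v *)
From HB Require Import structures.
From mathcomp Require Import all_boot all_order all_algebra.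
From mathcomp Require Import reals exp.
Set Implicit Arguments. Unset Strict Implicit. Unset Printing Implicit Defensive.
Import Order.TTheory GRing.Theory Num.Theory.
Local Open Scope ring_scope.

Section BanditQ.
Variables (R : realType) (N : nat).

Definition in_simplex (x : 'I_N -> R) : Prop :=
  (forall i, 0 <= x i) /\ \sum_(i < N) x i = 1.

Definition sqnorm (y : 'I_N -> R) : R := \sum_(i < N) (y i) ^+ 2.

Definition is_proj_simplex (y p : 'I_N -> R) : Prop :=
  in_simplex p /\
  forall z, in_simplex z -> sqnorm (fun i => y i - p i) <= sqnorm (fun i => y i - z i).

Definition in_Omega (T : nat) (P : {set 'I_N}) (lam : 'I_N -> R)
    (r : nat -> 'I_N -> R) (xs : 'I_N -> R) : Prop :=
  in_simplex xs /\
  forall i t, i \in P -> (1 <= t <= T)%N -> lam i <= r t i * xs i.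

Fixpoint Qlen (P : {set 'I_N}) (lam : 'I_N -> R) (r x : nat -> 'I_N -> R)
    (t : nat) (i : 'I_N) : R :=
  match t with
  | 0 => 0
  | t'.+1 => if i \in P
             then Num.max 0 (Qlen P lam r x t' i + lam i - r t i * x t i)
             else 0
  end.

Definition surrogate (P : {set 'I_N}) (lam : 'I_N -> R) (Vs : nat -> R)
    (r x : nat -> 'I_N -> R) (t : nat) : 'I_N -> R :=
  fun i => (Qlen P lam r x t.-1 i + Vs t) * r t i.

Definition ogd_point (P : {set 'I_N}) (lam : 'I_N -> R) (Vs : nat -> R)
    (r x : nat -> 'I_N -> R) (t : nat) : 'I_N -> R :=
  fun i => x t i + surrogate P lam Vs r x t i /
    Num.sqrt (2 * \sum_(1 <= tau < t.+1) sqnorm (surrogate P lam Vs r x tau)).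

Definition banditQ_traj (P : {set 'I_N}) (lam : 'I_N -> R) (Vs : nat -> R)
    (r x : nat -> 'I_N -> R) : Prop :=
  in_simplex (x 1%N) /\
  forall t, (1 <= t)%N -> is_proj_simplex (ogd_point P lam Vs r x t) (x t.+1).

End BanditQ.

(* Main.v *)
Require Import Defs.
From HB Require Import structures.
From mathcomp Require Import all_boot all_order all_algebra.
From mathcomp Require Import reals exp.
From mathcomp Require Import ring lra.
Import Order.TTheory GRing.Theory Num.Theory.
Set Implicit Arguments. Unset Strict Implicit. Unset Printing Implicit Defensive.
Local Open Scope ring_scope.

Section Generic.
Variables (R : realType) (N : nat).

Definition dot (u v : 'I_N -> R) : R := \sum_(i < N) u i * v i.

Lemma sqnorm_ext (u v : 'I_N -> R) : (forall i, u i = v i) -> sqnorm u = sqnorm v.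
Proof. by move=> h; apply: eq_bigr => i _; rewrite h. Qed.

Lemma sqnorm_ge0 (u : 'I_N -> R) : 0 <= sqnorm u.
Proof. by apply: sumr_ge0 => i _; rewrite sqr_ge0. Qed.

Lemma sqnorm_expand (u v : 'I_N -> R) (s : R) :
  sqnorm (fun i => u i - s * v i) = sqnorm u - 2 * s * dot u v + s ^+ 2 * sqnorm v.
Proof.
rewrite /sqnorm /dot !mulr_sumr -sumrB -big_split /=.
by apply: eq_bigr => i _; ring.
Qed.

Lemma simplex_le1 (y : 'I_N -> R) i : in_simplex y -> 0 <= y i <= 1.
Proof.
move=> [h0 h1]; rewrite h0 /= -h1 (bigD1 i) //= lerDl.
by apply: sumr_ge0 => j _; apply: h0.
Qed.

Lemma proj_ineq (y p z : 'I_N -> R) :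
  is_proj_simplex y p -> in_simplex z ->
  sqnorm (fun i => p i - z i) <= sqnorm (fun i => y i - z i).
Proof.
move=> [hp hmin] hz.
set a := dot (fun i => y i - p i) (fun i => z i - p i).
set d := sqnorm (fun i => z i - p i).
have hd : 0 <= d by apply: sqnorm_ge0.
have key : forall s, 0 <= s <= 1 -> 2 * s * a <= s ^+ 2 * d.
  move=> s /andP [s0 s1].
  have hw : in_simplex (fun i => p i + s * (z i - p i)).
    split.
      move=> i; have := simplex_le1 i hp; have := simplex_le1 i hz.
      move=> /andP[? ?] /andP[? ?]; nra.
    rewrite big_split /= -mulr_sumr sumrB.
    by case: hp => _ ->; case: hz => _ ->; rewrite subrr mulr0 addr0.
  have := hmin _ hw.
  rewrite (@sqnorm_ext (fun i => y i - (p i + s * (z i - p i)))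
            (fun i => (y i - p i) - s * (z i - p i))); last by move=> i; ring.
  rewrite sqnorm_expand -/a -/d; lra.
have ha : a <= 0.
  rewrite leNgt; apply/negP => ha.
  pose s := a / (a + d).
  have had : 0 < a + d by lra.
  have s0 : 0 < s by rewrite /s divr_gt0.
  have sd : s * d <= a.
    rewrite /s mulrAC ler_pdivrMr //; nra.
  have s1 : s <= 1 by rewrite /s ler_pdivrMr // mul1r; lra.
  have := key s; rewrite (ltW s0) s1 => /(_ isT) h.
  have : s * a <= 0 by nra.
  by rewrite leNgt mulr_gt0.
rewrite (@sqnorm_ext (fun i => y i - z i)
          (fun i => (y i - p i) - 1 * (z i - p i))); last by move=> i; ring.
rewrite sqnorm_expand -/a -/d.
have -> : sqnorm (fun i => p i - z i) = d.
  by apply: eq_bigr => i _; ring.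
have := sqnorm_ge0 (fun i => y i - p i); lra.
Qed.


Lemma maxr0P (u : R) : 0 <= Num.max 0 u /\ Num.max 0 u ^+ 2 <= u ^+ 2.
Proof. rewrite /Order.max; case: ifP => h; split => //; first exact: ltW.
  have := sqr_ge0 u; nra. Qed.

Lemma dot_neg (u v w : 'I_N -> R) :
  dot u (fun i => v i - w i) = - dot (fun i => w i - v i) u.
Proof. rewrite /dot -sumrN; apply: eq_bigr => i _; ring. Qed.

End Generic.

Section Traj.
Variables (R : realType) (N : nat) (P : {set 'I_N}) (lam : 'I_N -> R) (V : R)
  (r x : nat -> 'I_N -> R).
Hypothesis HV : 0 <= V.
Hypothesis Hlam : forall i, i \in P -> 0 <= lam i <= 1.
Hypothesis Hlam0 : forall i, i \notin P -> lam i = 0.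
Hypothesis Hr : forall t i, 0 <= r t i <= 1.
Hypothesis Htraj : banditQ_traj P lam (fun _ => V) r x.

Let Q t i := Qlen P lam r x t i.
Let g t := surrogate P lam (fun _ => V) r x t.
Let S t := \sum_(1 <= tau < t.+1) sqnorm (g tau).
Let A t := Num.sqrt (2 * S t).
Let B t := Num.sqrt (S t).
Let L t := \sum_(i < N) Q t i ^+ 2.

Lemma Q_ge0 t i : 0 <= Q t i.
Proof. rewrite /Q; case: t => [|t] /=; first exact: lexx. case: (i \in P); last exact: lexx. exact: (maxr0P _).1. Qed.

Lemma Q_notin t i : i \notin P -> Q t i = 0.
Proof. by rewrite /Q; case: t => [|t] //= /negbTE ->. Qed.

Lemma x_simplex t : (1 <= t)%N -> in_simplex (x t).
Proof.
case: Htraj => h1 h2.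
elim: t => [//|[|t] IH] _; first by [].
by case: (h2 t.+1 isT).
Qed.

Lemma S_ge0 t : 0 <= S t.
Proof. by apply: sumr_ge0 => k _; apply: sqnorm_ge0. Qed.

Lemma S_rec t : S t.+1 = S t + sqnorm (g t.+1).
Proof. by rewrite /S big_nat_recr. Qed.

Lemma S0 : S 0 = 0.
Proof. by rewrite /S big_geq. Qed.

Lemma S_mono t : S t <= S t.+1.
Proof. by rewrite S_rec lerDl sqnorm_ge0. Qed.

Lemma B_mono t : B t <= B t.+1.
Proof. by rewrite /B ler_sqrt ?S_mono // S_ge0. Qed.

Lemma A_mono t : A t <= A t.+1.
Proof. by rewrite /A ler_sqrt ?ler_pM2l ?S_mono // mulr_ge0 ?S_ge0. Qed.

Lemma B_mono_le s t : (s <= t)%N -> B s <= B t.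
Proof.
move=> /subnKC <-; elim: (t - s)%N => [|k IH]; first by rewrite addn0.
by rewrite addnS (le_trans IH) // B_mono.
Qed.


Let D z t := sqnorm (fun i => x t i - z i).

Lemma D_bound z t : in_simplex z -> (1 <= t)%N -> 0 <= D z t <= 2.
Proof.
move=> hz ht; rewrite /D sqnorm_ge0 /=.
have hx := x_simplex ht.
have -> : 2 = \sum_(i < N) x t i + \sum_(i < N) z i.
  by case: hx => _ ->; case: hz => _ ->.
rewrite -big_split /=; apply: ler_sum => i _.
have := simplex_le1 i hx; have := simplex_le1 i hz.
move=> /andP[? ?] /andP[? ?]; nra.
Qed.

Lemma step z t : in_simplex z -> (1 <= t)%N ->
  dot (g t) (fun i => z i - x t i) <=
  A t * (D z t - D z t.+1) / 2 + sqnorm (g t) / (2 * A t).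
Proof.
move=> hz ht.
have hA0 : 0 <= A t by apply: sqrtr_ge0.
case: (eqVneq (A t) 0) => hA.
  have hS : S t = 0.
    move/eqP: hA; rewrite /A sqrtr_eq0 => h2; have := S_ge0 t; lra.
  have hq : sqnorm (g t) = 0.
    case: t ht hS {hA hA0} => [//|t] _; rewrite S_rec => h.
    have := S_ge0 t; have := sqnorm_ge0 (g t.+1); lra.
  have hg : forall i, g t i = 0.
    move=> i; apply/eqP; rewrite -sqrf_eq0; apply/eqP.
    move: i isT; apply: psumr_eq0P hq => i _; exact: sqr_ge0.
  rewrite hA hq /dot big1 ?mul0r ?mulr0 ?invr0 ?addr0 //.
  by move=> i _; rewrite hg mul0r.
have hAp : 0 < A t by rewrite lt_neqAle eq_sym hA.
have hp : is_proj_simplex (ogd_point P lam (fun _ => V) r x t) (x t.+1).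
  by case: Htraj => _ h; apply: h.
have := proj_ineq hp hz.
rewrite (@sqnorm_ext _ _ (fun i => ogd_point P lam (fun _ => V) r x t i - z i)
   (fun i => (x t i - z i) - (- (A t)^-1) * g t i)); last first.
  by move=> i; rewrite /ogd_point /A /S /g; ring.
rewrite sqnorm_expand -/(D z t.+1) => h.
rewrite dot_neg.
change (sqnorm (fun i => x t i - z i)) with (D z t) in h.
set a := dot _ _ in h *.
set q := sqnorm (g t) in h *.
set e := (A t)^-1 in h.
have Ae : A t * e = 1 by rewrite /e mulfV.
have h2 : A t * (- (2 * e * a) - e ^+ 2 * q) <= A t * (D z t - D z t.+1).
  rewrite ler_wpM2l //; lra.
have E : A t * (- (2 * e * a) - e ^+ 2 * q) = - (2 * a) - e * q.
  transitivity (- (2 * a) * (A t * e) - e * q * (A t * e)); first ring.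
  by rewrite Ae; ring.
rewrite E in h2.
have -> : q / (2 * A t) = e * q / 2 by rewrite /e invfM; ring.
lra.
Qed.


Lemma A0 : A 0 = 0.
Proof. by rewrite /A S0 mulr0 sqrtr0. Qed.

Lemma B0 : B 0 = 0.
Proof. by rewrite /B S0 sqrtr0. Qed.

Lemma A_ge0 t : 0 <= A t. Proof. exact: sqrtr_ge0. Qed.
Lemma B_ge0 t : 0 <= B t. Proof. exact: sqrtr_ge0. Qed.

Lemma B_le_A t : B t <= A t.
Proof. by rewrite /A /B ler_sqrt ?mulr_ge0 ?S_ge0 //; have := S_ge0 t; lra. Qed.

Lemma A_le_2B t : A t <= 2 * B t.
Proof.
rewrite /A /B.
have -> : 2 * Num.sqrt (S t) = Num.sqrt (2 ^+ 2 * S t).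
  by rewrite sqrtrM ?sqr_ge0 // sqrtr_sqr ger0_norm.
by rewrite ler_sqrt ?mulr_ge0 ?sqr_ge0 ?S_ge0 //; have := S_ge0 t; lra.
Qed.

Lemma tel1 z tau : in_simplex z ->
  \sum_(1 <= t < tau.+1) A t * (D z t - D z t.+1) <= 2 * A tau - A tau * D z tau.+1.
Proof.
move=> hz; elim: tau => [|tau IH].
  by rewrite big_geq // A0; lra.
rewrite big_nat_recr //=.
have := A_mono tau; have := A_ge0 tau.
have := @D_bound z tau.+1 hz isT; have := @D_bound z tau.+2 hz isT.
move=> /andP[? ?] /andP[? ?] ? ?.
have := mulr_ge0 (_ : 0 <= A tau.+1 - A tau) (_ : 0 <= 2 - D z tau.+1).
nra.
Qed.

Lemma tel2 tau : \sum_(1 <= t < tau.+1) sqnorm (g t) / (2 * A t) <= B tau.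
Proof.
elim: tau => [|tau IH]; first by rewrite big_geq // B0.
rewrite big_nat_recr //=.
suff : sqnorm (g tau.+1) / (2 * A tau.+1) <= B tau.+1 - B tau by lra.
have hBm := B_mono tau; have hB0 := B_ge0 tau.
case: (eqVneq (A tau.+1) 0) => hA.
  by rewrite hA mulr0 invr0 mulr0; lra.
have hAp : 0 < A tau.+1 by rewrite lt_neqAle eq_sym hA A_ge0.
rewrite ler_pdivrMr ?mulr_gt0 //.
have hq : sqnorm (g tau.+1) = B tau.+1 ^+ 2 - B tau ^+ 2.
  by rewrite /B !sqr_sqrtr ?S_ge0 // S_rec; ring.
rewrite hq.
have := B_le_A tau.+1.
move=> hBA.
have := mulr_ge0 (_ : 0 <= B tau.+1 - B tau) (_ : 0 <= 2 * A tau.+1 - B tau.+1 - B tau).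
nra.
Qed.

Lemma regret z tau : in_simplex z ->
  \sum_(1 <= t < tau.+1) dot (g t) (fun i => z i - x t i) <= A tau + B tau.
Proof.
move=> hz.
apply: le_trans (_ : \sum_(1 <= t < tau.+1)
   (A t * (D z t - D z t.+1) / 2 + sqnorm (g t) / (2 * A t)) <= _).
  by apply: ler_sum_nat => t /andP[ht _]; apply: step.
rewrite big_split /= -mulr_suml.
have := tel1 tau hz; have := tel2 tau.
have := @D_bound z tau.+1 hz isT; have := A_ge0 tau.
move=> ? /andP[? ?] ? ?; nra.
Qed.


Variables (T : nat) (xs : 'I_N -> R).
Hypothesis Hxs : in_Omega T P lam r xs.

Lemma xs_simplex : in_simplex xs. Proof. by case: Hxs. Qed.

Lemma drift_i t i : (1 <= t <= T)%N ->
  Q t i ^+ 2 <= Q t.-1 i ^+ 2 + 2 * (g t i * (xs i - x t i)) + 2 * V * x t i + 1.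
Proof.
case: t => [//|t] ht.
have hx := simplex_le1 i (x_simplex (isT : (1 <= t.+1)%N)).
have hxs0 : 0 <= xs i by case: xs_simplex => h _; apply: h.
have hri := Hr t.+1 i.
have hq := Q_ge0 t i.
move: hx hri => /andP[hx0 hx1] /andP[hr0 hr1].
have hVx : 0 <= V * (x t.+1 i * (1 - r t.+1 i)) by rewrite !mulr_ge0 //; lra.
have hVr : 0 <= V * (r t.+1 i * xs i) by rewrite !mulr_ge0.
rewrite /g /surrogate /=.
case: (boolP (i \in P)) => hi.
  have hl := Hlam hi; move: hl => /andP[hl0 hl1].
  have hlr : lam i <= r t.+1 i * xs i by case: Hxs => _ h; apply: h.
  rewrite /Q /= hi.
  set q := Qlen P lam r x t i in hq *.
  have [m0 m2] := maxr0P (q + lam i - r t.+1 i * x t.+1 i).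
  apply: le_trans m2 _.
  have h1 : 0 <= q * (r t.+1 i * xs i - lam i) by rewrite mulr_ge0 //; lra.
  have hrx0 : 0 <= r t.+1 i * x t.+1 i by rewrite mulr_ge0.
  have hrx1 : r t.+1 i * x t.+1 i <= 1.
    by rewrite -[1]mulr1 ler_pM //.
  have h3 : (lam i - r t.+1 i * x t.+1 i) ^+ 2 <= 1.
    have := mulr_ge0 (_ : 0 <= 1 - (lam i - r t.+1 i * x t.+1 i))
                     (_ : 0 <= 1 + (lam i - r t.+1 i * x t.+1 i)).
    nra.
  nra.
rewrite Q_notin // /Q /=.
have -> : Qlen P lam r x t i = 0 by apply: Q_notin.
nra.
Qed.


Lemma drift t : (1 <= t <= T)%N ->
  L t <= L t.-1 + 2 * dot (g t) (fun i => xs i - x t i) + 2 * V + N%:R.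
Proof.
move=> ht.
apply: le_trans (_ : \sum_(i < N)
  (Q t.-1 i ^+ 2 + 2 * (g t i * (xs i - x t i)) + 2 * V * x t i + 1) <= _).
  by apply: ler_sum => i _; apply: drift_i.
have hx : \sum_(i < N) x t i = 1.
  by case: (x_simplex (_ : (1 <= t)%N)) => //; case/andP: ht.
rewrite !big_split /= -!mulr_sumr hx sumr_const card_ord /L /dot.
by rewrite mulr1 -[1 *+ N]/(N%:R).
Qed.

Lemma L0 : L 0 = 0.
Proof. by rewrite /L big1 // => i _; rewrite /Q /= expr0n. Qed.

Lemma L_bound tau : (tau <= T)%N ->
  L tau <= 2 * \sum_(1 <= t < tau.+1) dot (g t) (fun i => xs i - x t i)
           + tau%:R * (2 * V + N%:R).
Proof.
elim: tau => [|tau IH] h; first by rewrite L0 big_geq // mul0r; lra.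
rewrite big_nat_recr //=.
have := drift (_ : (1 <= tau.+1 <= T)%N); rewrite h /= => /(_ isT) hd.
have := IH (ltnW h).
rewrite -natr1. lra.
Qed.

Lemma L_bound2 tau : (tau <= T)%N ->
  L tau <= 6 * B T + T%:R * (2 * V + N%:R).
Proof.
move=> h.
have := L_bound h; have := regret tau xs_simplex.
have := A_le_2B tau; have := B_mono_le h.
have : tau%:R * (2 * V + N%:R) <= T%:R * (2 * V + N%:R).
  by rewrite ler_wpM2r ?ler_nat // addr_ge0 ?mulr_ge0 ?ler0n.
move=> h1 h2 h3 h4 h5.
set s := \sum_(1 <= t < tau.+1) _ in h4 h5.
lra.
Qed.

Lemma g_bound t : sqnorm (g t) <= 2 * L t.-1 + 2 * N%:R * V ^+ 2.
Proof.
apply: le_trans (_ : \sum_(i < N) (2 * Q t.-1 i ^+ 2 + 2 * V ^+ 2) <= _).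
  apply: ler_sum => i _; rewrite /g /surrogate.
  have := Hr t i; have := Q_ge0 t.-1 i; rewrite /Q.
  move=> hq /andP[h0 h1].
  have := mulr_ge0 (_ : 0 <= (Qlen P lam r x t.-1 i + V) ^+ 2) (_ : 0 <= 1 - r t i ^+ 2).
  have := sqr_ge0 (Qlen P lam r x t.-1 i - V).
  nra.
rewrite big_split /= -!mulr_sumr sumr_const card_ord /L.
rewrite -[_ *+ N]mulr_natl; lra.
Qed.

Lemma S_bound : (0 < T)%N ->
  S T <= T%:R * (12 * B T + 2 * (T%:R * (2 * V + N%:R)) + 2 * N%:R * V ^+ 2).
Proof.
move=> hT.
set c := (12 * B T + _ + _).
apply: le_trans (_ : \sum_(1 <= t < T.+1) c <= _); last first.
  by rewrite sumr_const_nat subn1 /= mulr_natl.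
apply: ler_sum_nat => t /andP[h1 h2].
apply: le_trans (g_bound t) _.
have hT' : (t.-1 <= T)%N by case: t h1 h2 => // t _ /ltnW.
have := L_bound2 hT'; rewrite /c; lra.
Qed.


Lemma Q_le_L t i : Q t i ^+ 2 <= L t.
Proof.
rewrite /L (bigD1 i) //= lerDl; apply: sumr_ge0 => j _; exact: sqr_ge0.
Qed.

Lemma sec_final : (0 < T)%N -> exists b : R, 0 <= b /\
  b ^+ 2 <= T%:R * (12 * b + 2 * (T%:R * (2 * V + N%:R)) + 2 * N%:R * V ^+ 2) /\
  forall tau i, (tau <= T)%N -> Q tau i ^+ 2 <= 6 * b + T%:R * (2 * V + N%:R).
Proof.
move=> hT; exists (B T); split; first exact: B_ge0.
split; first by rewrite /B sqr_sqrtr ?S_ge0 //; apply: S_bound.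
move=> tau i h; apply: le_trans (Q_le_L tau i) _; exact: L_bound2.
Qed.

End Traj.

Lemma numeric (R : realType) (c2 n b q V u : R) :
  0 <= c2 -> 0 <= n -> 1 <= u -> 0 <= V -> V <= c2 * u -> 0 <= b -> 0 <= q ->
  b ^+ 2 <= u ^+ 2 * (12 * b + 2 * (u ^+ 2 * (2 * V + n)) + 2 * n * V ^+ 2) ->
  q ^+ 2 <= 6 * b + u ^+ 2 * (2 * V + n) ->
  q ^+ 4 <= (6 * (12 + (4 * c2 + 2 * n + 2 * n * c2 ^+ 2)) + 2 * c2 + n) ^+ 2 * u ^+ 6.
Proof.
move=> hc2 hn hu hV0 hV hb hq hb2 hq2.
set k1 := 4 * c2 + 2 * n + 2 * n * c2 ^+ 2.
set m := 12 + k1.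
have hk1 : 0 <= k1 by rewrite /k1; have := mulr_ge0 hn (sqr_ge0 c2); nra.
set w := u ^+ 3.
have hw : u ^+ 2 <= w by rewrite /w exprS; have := sqr_ge0 u; nra.
have hw1 : 1 <= u ^+ 2 by nra.
have hE : u ^+ 2 * (2 * V + n) <= (2 * c2 + n) * w.
  rewrite /w exprS; have : u ^+ 2 * (2 * V + n) <= u ^+ 2 * (2 * c2 * u + n).
    by rewrite ler_wpM2l ?sqr_ge0 //; lra.
  have := mulr_ge0 (sqr_ge0 u) hn. nra.
have hV2 : V ^+ 2 <= c2 ^+ 2 * u ^+ 2.
  rewrite -exprMn; apply: lerXn2r; rewrite ?nnegrE //; nra.
have hc : 2 * (u ^+ 2 * (2 * V + n)) + 2 * n * V ^+ 2 <= k1 * w.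
  have : n * V ^+ 2 <= n * c2 ^+ 2 * w.
    rewrite -mulrA ler_wpM2l //; apply: le_trans hV2 _.
    by rewrite ler_wpM2l ?sqr_ge0.
  rewrite /k1; nra.
have hbm : b <= m * w.
  rewrite leNgt; apply/negP => hlt.
  have h1 : b * (m * w) < b * b.
    by rewrite ltr_pM2l //; apply: le_lt_trans hlt; rewrite mulr_ge0 //;
       rewrite /m; nra.
  have h2 : u ^+ 2 * (k1 * w) <= k1 * w * (m * w).
    have hw0 : 0 <= w by lra.
    have hmw : u ^+ 2 <= m * w.
      have := mulr_ge0 (_ : 0 <= m - 1) hw0; rewrite /m; nra.
    by rewrite [u ^+ 2 * _]mulrC ler_wpM2l // mulr_ge0.
  have h3 : u ^+ 2 * b <= w * b by rewrite ler_wpM2r.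
  have h4 : u ^+ 2 * (2 * (u ^+ 2 * (2 * V + n)) + 2 * n * V ^+ 2) <= u ^+ 2 * (k1 * w).
    by rewrite ler_wpM2l ?sqr_ge0.
  have hw0 : 0 <= w by lra.
  have h5 := mulr_ge0 (mulr_ge0 hk1 hw0) (_ : 0 <= b - m * w).
  have : b * b <= b ^+ 2 by rewrite expr2.
  rewrite /m in h1 h2 h5 hlt *; nra.
set K := 6 * m + 2 * c2 + n.
have hq2' : q ^+ 2 <= K * w by rewrite /K; nra.
have -> : q ^+ 4 = (q ^+ 2) ^+ 2 by rewrite -exprM.
have -> : u ^+ 6 = w ^+ 2 by rewrite /w -exprM.
rewrite -exprMn; apply: lerXn2r; rewrite ?nnegrE ?sqr_ge0 //.
have := sqr_ge0 q; lra.
Qed.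

Theorem proposition1 (R : realType) (N : nat) (c1 c2 : R) :
  0 < c1 -> c1 <= c2 ->
  exists C : R,
  forall (T : nat) (V : R) (P : {set 'I_N}) (lam : 'I_N -> R)
         (r x : nat -> 'I_N -> R),
    (0 < T)%N ->
    c1 * Num.sqrt (T%:R) <= V <= c2 * Num.sqrt (T%:R) ->
    (forall i, i \in P -> 0 <= lam i <= 1) ->
    (forall i, i \notin P -> lam i = 0) ->
    \sum_(i in P) lam i <= 1 ->
    (forall t i, 0 <= r t i <= 1) ->
    (exists xs, in_Omega T P lam r xs) ->
    banditQ_traj P lam (fun _ => V) r x ->
    forall (i : 'I_N) (t : nat), i \in P -> (1 <= t <= T)%N ->
      Qlen P lam r x t i <= C * powR (T%:R) (3 / 4).
Proof.
move=> hc1 hc12.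
set n := (N%:R : R).
set K := 6 * (12 + (4 * c2 + 2 * n + 2 * n * c2 ^+ 2)) + 2 * c2 + n.
exists (1 + K ^+ 2).
move=> T V P lam r x hT /andP[hV1 hV2] Hlam Hlam0 Hlamsum Hr [xs hxs] Htraj
  i t hi /andP[ht1 htT].
set u := Num.sqrt (T%:R : R).
have hu2 : u ^+ 2 = T%:R by rewrite /u sqr_sqrtr ?ler0n.
have hT1 : (1 : R) <= T%:R by rewrite ler1n.
have hu1 : 1 <= u.
  rewrite /u; apply: le_trans (_ : Num.sqrt 1 <= _); first by rewrite sqrtr1.
  by rewrite ler_sqrt ?ler0n.
have hV0 : 0 <= V by apply: le_trans hV1; rewrite mulr_ge0 ?sqrtr_ge0 // ltW.
have hc2 : 0 <= c2 by apply: le_trans hc12; apply: ltW.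
have hn : 0 <= n by rewrite /n ler0n.
have [b [hb0 [hb hQ]]] := sec_final hV0 Hlam Hr Htraj hxs hT.
have hq := hQ t i htT.
rewrite -hu2 in hb hq.
have hq0 : 0 <= Qlen P lam r x t i by apply: (Q_ge0 P lam r x).
have h4 := numeric hc2 hn hu1 hV0 hV2 hb0 hq0 hb hq.
set p := powR (T%:R : R) (3 / 4).
have hp0 : 0 <= p by apply: powR_ge0.
have hp : p ^+ 4 = u ^+ 6.
  rewrite -powR_mulrn // -powRrM.
  have -> : 3 / 4 * 4%:R = 3%:R :> R by field.
  by rewrite powR_mulrn ?ler0n // -hu2 -exprM.
have hC : 1 <= 1 + K ^+ 2 by rewrite lerDl sqr_ge0.
rewrite -(ler_pXn2r (_ : (0 < 4)%N)) ?nnegrE ?mulr_ge0 //; last by lra.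
rewrite exprMn hp.
apply: le_trans h4 _.
rewrite ler_wpM2r ?exprn_ge0 //; first exact: sqrtr_ge0.
change (K ^+ 2 <= (1 + K ^+ 2) ^+ 4).
have h1 : K ^+ 2 <= 1 + K ^+ 2 by lra.
apply: le_trans h1 _.
have h3 := exprn_ege1 3 hC.
rewrite exprS -[X in X <= _]mulr1 ler_wpM2l //.
exact: le_trans ler01 hC.
Qed.
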